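(* Let $\mathbf{F}$ be a field of characteristic $3$, let $\lambda=(\lambda_1,\lambda_2)$ be a partition with $m=\lambda_1-\lambda_2$, and let $t\in\mathbf{N}$. Then in $S_\mathbf{F}(\lambda)$, \[\psi_{m,t}=\psi_{m,t-1}\Big[\tbinom{m_{t-1}}{2}+\tbinom{m_{t-1}}{1}b(3^{t-1})+\tbinom{m_{t-1}}{0}b(2\cdot3^{t-1})\Big]+\tbinom{m_{t-1}}{2}b(3^{t-1})+\tbinom{m_{t-1}}{1}b(2\cdot3^{t-1}),\] where $m_{t-1}$ is the $(t-1)$-th base-3 digit of $m$.
   Context: $S_\mathbf{F}(\lambda)=\operatorname{End}_{\mathbf{F}S_r}(M^\lambda)$ is a commutative $\mathbf{F}$-algebra with basis $b(0)=\mathbf{1},\dots,b(\lambda_2)$ and multiplication $b(i)b(j)=\sum_{h=\max\{i,j\}}^{i+j}\binom{h}{i}\binom{h}{j}\binom{m+i+j}{i+j-h}b(h)$, $b(a)=0$ for $a>\lambda_2$. For $m=\sum_u m_u3^u$ in base 3, $m_{<u}=\sum_{s<u}m_s3^s$ and $\psi_{m,u}=\sum_{k=1}^{3^u-1}\binom{m_{<u}}{3^u-k}b(k)$ (so $\psi_{m,0}=0$). *)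

(* Defs.v *)
From HB Require Import structures.
From mathcomp Require Import all_boot all_order all_algebra.
Set Implicit Arguments. Unset Strict Implicit. Unset Printing Implicit Defensive.
Import Order.TTheory GRing.Theory Num.Theory.
Local Open Scope ring_scope.

(* The algebra S_F(lambda), lambda = (l1, l2), m = l1 - l2, is modelled
   concretely by coordinate row vectors w.r.t. the basis b(0), ..., b(l2):
   an element x is the row vector 'rV[F]_(l2.+1), x = \sum_k x 0 k *: b(k). *)
Definition Salg (F : fieldType) (l2 : nat) := 'rV[F]_(l2.+1).

(* basis element b(a); b(a) = 0 when a > l2 *)
Definition bS (F : fieldType) (l2 a : nat) : Salg F l2 :=
  \row_(j < l2.+1) (if (j : nat) == a then 1 else 0).

Definition bmul (F : fieldType) (l2 m i j : nat) : Salg F l2 :=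
  \sum_(maxn i j <= h < (i + j).+1)
     ('C(h, i) * 'C(h, j) * 'C(m + i + j, i + j - h))%:R *: bS F l2 h.

Definition mulS (F : fieldType) (l2 m : nat) (x y : Salg F l2) : Salg F l2 :=
  \sum_(i < l2.+1) \sum_(j < l2.+1) (x 0 i * y 0 j) *: bmul F l2 m i j.

Definition digit3 (m u : nat) : nat := (m %/ 3 ^ u) %% 3.
Definition trunc3 (m u : nat) : nat := m %% 3 ^ u.

Definition psi (F : fieldType) (l2 m u : nat) : Salg F l2 :=
  \sum_(1 <= k < 3 ^ u) 'C(trunc3 m u, 3 ^ u - k)%:R *: bS F l2 k.

(* Main.v *)
Require Import Defs.
From HB Require Import structures.
From mathcomp Require Import all_boot all_order all_algebra.
From mathcomp Require Import zify.
Import GRing.Theory.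
Local Open Scope ring_scope.
Lemma sum_ind (R : nmodType) N K (f : nat -> R) :
  \sum_(i < N.+1) (if (i:nat) == K then f i else 0) = if (K <= N)%N then f K else 0.
Proof.
case: (leqP K N) => hK.
  have hK' : (K < N.+1)%N by [].
  rewrite (bigD1 (Ordinal hK')) //= eqxx big1 ?addr0 // => i ne.
  have -> : ((i : nat) == K) = false; last by [].
  by apply/negbTE; move: ne; apply: contra => /eqP e; apply/eqP/val_inj.
rewrite big1 // => i _.
have -> : ((i : nat) == K) = false; last by [].
apply/negbTE; rewrite neq_ltn; apply/orP; left.
exact: (leq_trans (ltn_ord i) hK).
Qed.

Section S.
Variables (F : fieldType) (l2 m : nat).

Lemma bS_out a : (l2 < a)%N -> bS F l2 a = 0.
Proof.
move=> h; apply/rowP => j; rewrite !mxE.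
have -> : ((j : nat) == a) = false; last by [].
apply/negbTE; rewrite neq_ltn (leq_trans (ltn_ord j) h) //.
Qed.

Lemma bmul_out i j : (l2 < maxn i j)%N -> bmul F l2 m i j = 0.
Proof.
move=> h; rewrite /bmul big_nat_cond big1 // => k /andP [/andP [h1 _] _].
by rewrite bS_out ?scaler0 // (leq_trans h h1).
Qed.

Lemma sum_bS (V : lmodType F) i (f : nat -> V) :
  \sum_(a < l2.+1) (bS F l2 i 0 a) *: f a = if (i <= l2)%N then f i else 0.
Proof.
rewrite -sum_ind; apply: eq_bigr => a _; rewrite mxE.
by case: (_ == i); rewrite ?scale1r ?scale0r.
Qed.

Lemma mulS_bS i j : mulS m (bS F l2 i) (bS F l2 j) = bmul F l2 m i j.
Proof.
rewrite /mulS.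
under eq_bigr => a _ do under eq_bigr => b _ do rewrite -scalerA.
under eq_bigr => a _ do rewrite -scaler_sumr sum_bS.
case: (leqP j l2) => hj.
  rewrite (sum_bS _ i (fun a => bmul F l2 m a j)).
  case: (leqP i l2) => hi //.
  by rewrite bmul_out // leq_max hi.
rewrite big1 => [|a _]; last by rewrite scaler0.
by rewrite bmul_out // leq_max hj orbT.
Qed.

Lemma mulS_addl (x1 x2 y : Salg F l2) : mulS m (x1 + x2) y = mulS m x1 y + mulS m x2 y.
Proof.
rewrite /mulS -big_split; apply: eq_bigr => a _; rewrite -big_split.
by apply: eq_bigr => b _; rewrite !mxE mulrDl scalerDl.
Qed.

Lemma mulS_addr (x y1 y2 : Salg F l2) : mulS m x (y1 + y2) = mulS m x y1 + mulS m x y2.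
Proof.
rewrite /mulS -big_split; apply: eq_bigr => a _; rewrite -big_split.
by apply: eq_bigr => b _; rewrite !mxE mulrDr scalerDl.
Qed.

Lemma mulS_scalel c (x y : Salg F l2) : mulS m (c *: x) y = c *: mulS m x y.
Proof.
rewrite /mulS scaler_sumr; apply: eq_bigr => a _; rewrite scaler_sumr.
by apply: eq_bigr => b _; rewrite !mxE scalerA mulrA.
Qed.

Lemma mulS_scaler c (x y : Salg F l2) : mulS m x (c *: y) = c *: mulS m x y.
Proof.
rewrite /mulS scaler_sumr; apply: eq_bigr => a _; rewrite scaler_sumr.
by apply: eq_bigr => b _; rewrite !mxE scalerA mulrCA.
Qed.

Lemma mulS_0l (y : Salg F l2) : mulS m (0 : Salg F l2) y = 0.
Proof. by rewrite /mulS big1 // => a _; rewrite big1 // => b _; rewrite mxE mul0r scale0r. Qed.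

Lemma mulS_suml I (r : seq I) (P : pred I) (f : I -> Salg F l2) y :
  mulS m (\sum_(i <- r | P i) f i) y = \sum_(i <- r | P i) mulS m (f i) y.
Proof.
exact: (big_morph (fun x => mulS m x y) (fun a b => mulS_addl a b y) (mulS_0l y)).
Qed.

End S.
Lemma coefP1 (R : nzRingType) N K : (('X + 1 : {poly R})^+N)`_K = ('C(N,K))%:R.
Proof.
rewrite exprD1n coef_sum.
under eq_bigr do rewrite coefMn coefXn.
transitivity (\sum_(i < N.+1) (if (i:nat) == K then ('C(N,i))%:R else 0 : R)).
  by apply: eq_bigr => i _; rewrite eq_sym; case: (_ == K); rewrite ?mulr1n ?mul0rn.
rewrite (sum_ind _ N K (fun i => ('C(N,i))%:R)); case: leqP => // h; by rewrite bin_small.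
Qed.

Lemma lucas3 (F : fieldType) (hF : (3 \in [pchar F])%N) u r d q s :
  (r < 3^u)%N -> (s < 3^u)%N ->
  ('C(r + d * 3^u, q * 3^u + s))%:R = ('C(d,q) * 'C(r,s))%:R :> F.
Proof.
move=> hr hs; set n := (3 ^ u)%N in hr hs *.
have frob : ('X + 1 : {poly F})^+ n = 'X^n + 1.
  rewrite exprDn_pchar ?expr1n //.
  rewrite /n pnatX; apply/orP; left; rewrite pnatE //.
  by rewrite pchar_poly.
have E : ('X + 1 : {poly F})^+ (r + d*n) =
   \sum_(i < d.+1) ('C(d,i))%:R *: ('X^(n*i) * ('X+1)^+r).
  rewrite exprD mulnC exprM frob (exprD1n ('X^n)) mulrC big_distrl /=.
  apply: eq_bigr => i _; rewrite -exprM scaler_nat mulrnAl //.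
rewrite -(coefP1 F (r + d * n)) E coef_sum.
under eq_bigr do rewrite coefZ coefXnM coefP1.
transitivity (\sum_(i < d.+1)
   (if (i:nat) == q then ('C(d,i) * 'C(r,s))%:R else 0 : F)).
  apply: eq_bigr => i _.
  rewrite [(q * n)%N]mulnC.
  case: (ltngtP i q) => hi.
  - have h1 : (n * i.+1 <= n * q)%N := leq_mul (leqnn n) hi.
    rewrite mulnS in h1.
    have -> : ((n * q + s) < n * i)%N = false by apply/negbTE; rewrite -leqNgt; lia.
    rewrite (@bin_small r) ?mulr0 //; lia.
  - have h1 : (n * q.+1 <= n * i)%N := leq_mul (leqnn n) hi.
    rewrite mulnS in h1.
    have -> : ((n * q + s) < n * i)%N = true by lia.
    by rewrite mulr0.
  - rewrite hi; have -> : ((n * q + s) < n * q)%N = false by apply/negbTE; rewrite -leqNgt; lia.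
    by rewrite natrM; congr (_ * _%:R); congr 'C(_,_); lia.
rewrite (sum_ind _ d q (fun i => ('C(d,i) * 'C(r,s))%:R)); case: leqP => // h.
by rewrite bin_small.
Qed.

Lemma bmul_pow (F : fieldType) (hF : (3 \in [pchar F])%N) l2 m u k q :
  (k < 3^u)%N -> bmul F l2 m k (q * 3^u) = bS F l2 (q * 3^u + k).
Proof.
move=> hk; set n := (3 ^ u)%N in hk *.
have hn : (0 < n)%N by rewrite expn_gt0.
rewrite /bmul.
have hmx : (maxn k (q*n) <= q*n + k)%N by rewrite geq_max; apply/andP; split; lia.
rewrite (addnC k (q*n)%N) big_nat_recr //=.
rewrite big_nat_cond big1 ?add0r => [|h /andP [/andP [h1 h2] _]].
  have e1 : ('C(q*n+k, k))%:R = 1 :> F.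
    have := lucas3 _ hF u k q 0 k hk hk.
    by rewrite mul0n add0n bin0 binn muln1 [(k + _)%N]addnC.
  have e2 : ('C(q*n+k, q*n))%:R = 1 :> F.
    have := lucas3 _ hF u k q q 0 hk hn.
    by rewrite addn0 bin0 binn muln1 [(k + _)%N]addnC.
  by rewrite subnn bin0 muln1 natrM e1 e2 mulr1 scale1r.
have hq : (q * n <= h)%N by move: h1; rewrite geq_max => /andP [].
have eh : h = ((h - q*n) + q*n)%N by lia.
have hs : (h - q*n < k)%N by lia.
have e0 : ('C(h, k))%:R = 0 :> F.
  have := lucas3 _ hF u (h - q*n) q 0 k (ltn_trans hs hk) hk.
  by rewrite mul0n add0n -eh bin0 mul1n (@bin_small (h - q * n)%N).
by rewrite !natrM e0 !mul0r scale0r.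
Qed.

Lemma split3 (V : nmodType) n (f : nat -> V) : (0 < n)%N ->
  \sum_(1 <= k < 3*n) f k = \sum_(1 <= k < n) f k + f n
     + \sum_(1 <= k < n) f (n + k)%N + f (2*n)%N + \sum_(1 <= k < n) f (2*n + k)%N.
Proof.
move=> hn.
have shift a : \sum_(a.+1 <= i < a + n) f i = \sum_(1 <= k < n) f (a + k)%N.
  rewrite (big_addn 1 _ a) (_ : (a + n - a = n)%N); last by lia.
  by apply: eq_bigr => i _; rewrite addnC.
rewrite (@big_cat_nat _ _ _ n 1 (3*n)); [|lia|lia].
rewrite (@big_ltn _ _ _ n (3*n)); last by lia.
rewrite (@big_cat_nat _ _ _ (2*n) n.+1 (3*n)); [|lia|lia].
rewrite (@big_ltn _ _ _ (2*n) (3*n)); last by lia.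
rewrite (_ : (2 * n)%N = (n + n)%N); last by lia.
rewrite (_ : (3 * n)%N = ((n + n) + n)%N); last by lia.
by rewrite !shift /= !addrA; under eq_bigr do rewrite add0n.
Qed.

Lemma trunc3S m u : trunc3 m u.+1 = (trunc3 m u + digit3 m u * 3 ^ u)%N.
Proof.
rewrite /trunc3 /digit3.
have hp : (0 < 3 ^ u)%N by rewrite expn_gt0.
have e1 := divn_eq m (3 ^ u).
have e2 := divn_eq (m %/ 3 ^ u) 3.
have hr : (m %% 3 ^ u < 3 ^ u)%N by rewrite ltn_pmod.
have hd : ((m %/ 3 ^ u) %% 3 < 3)%N by rewrite ltn_pmod.
set a := (m %/ 3 ^ u %/ 3)%N in e2; set d := ((m %/ 3 ^ u) %% 3)%N in e2 hd *.
set r := (m %% 3 ^ u)%N in e1 hr *.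
have em : m = (a * 3 ^ u.+1 + (r + d * 3 ^ u))%N.
  by rewrite {1}e1 e2 expnS; nia.
rewrite {1}em modnMDl modn_small // expnS.
have : (d * 3 ^ u <= 2 * 3 ^ u)%N by rewrite leq_mul2r; apply/orP; right; lia.
lia.
Qed.

Lemma mul_psi_pow (F : fieldType) (hF : (3 \in [pchar F])%N) l2 m u q (c : nat -> F) :
  mulS m (\sum_(1 <= k < 3 ^ u) c k *: bS F l2 k) (bS F l2 (q * 3 ^ u))
  = \sum_(1 <= k < 3 ^ u) c k *: bS F l2 (q * 3 ^ u + k).
Proof.
rewrite mulS_suml big_nat_cond [RHS]big_nat_cond.
apply: eq_bigr => k /andP [/andP [_ hk] _].
by rewrite mulS_scalel mulS_bS bmul_pow.
Qed.

Lemma ac5 (V : nmodType) (A B C D E : V) : A + B + C + D + E = A + C + E + B + D.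
Proof.
rewrite -!addrA; congr (_ + _); rewrite addrCA; congr (_ + _).
by rewrite [E + _]addrC addrA.
Qed.

Theorem mainTheorem6 (F : fieldType) (hF : (3 \in [pchar F])%N)
  (l1 l2 : nat) (hl : (l2 <= l1)%N) (t : nat) (ht : (1 <= t)%N) :
  let m := (l1 - l2)%N in
  let d := digit3 m t.-1 in
  let b := bS F l2 in
  psi F l2 m t =
    mulS m (psi F l2 m t.-1)
      ('C(d, 2)%:R *: b 0%N + 'C(d, 1)%:R *: b (3 ^ t.-1)%N
       + 'C(d, 0)%:R *: b (2 * 3 ^ t.-1)%N)
    + 'C(d, 2)%:R *: b (3 ^ t.-1)%N + 'C(d, 1)%:R *: b (2 * 3 ^ t.-1)%N.
Proof.
case: t ht => // u _ /=.
set m := (l1 - l2)%N; set d := digit3 m u; rewrite /psi.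
have hn : (0 < 3 ^ u)%N by rewrite expn_gt0.
have hr : (trunc3 m u < 3 ^ u)%N by rewrite /trunc3 ltn_pmod.
have L := lucas3 _ hF u (trunc3 m u) d.
rewrite trunc3S -/d expnS split3 //.
rewrite !mulS_addr !mulS_scaler.
have P0 := mul_psi_pow _ hF l2 m u 0 (fun k => ('C(trunc3 m u, 3 ^ u - k))%:R).
have P1 := mul_psi_pow _ hF l2 m u 1 (fun k => ('C(trunc3 m u, 3 ^ u - k))%:R).
have P2 := mul_psi_pow _ hF l2 m u 2 (fun k => ('C(trunc3 m u, 3 ^ u - k))%:R).
rewrite mul0n in P0; rewrite mul1n in P1.
rewrite P0 P1 P2 bin0 scale1r.
set n := (3 ^ u)%N in hn hr L *; set r := trunc3 m u in hr L *.
have X1 : \sum_(1 <= k < n) ('C(r + d * n, 3 * n - k))%:R *: bS F l2 k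
   = ('C(d, 2))%:R *: \sum_(1 <= k < n) ('C(r, n - k))%:R *: bS F l2 (0 + k).
  rewrite scaler_sumr big_nat_cond [RHS]big_nat_cond; apply: eq_bigr.
  move=> k /andP [/andP [k1 k2] _]; rewrite scalerA -natrM -L //; last by lia.
  by rewrite add0n; congr (_%:R *: _); congr 'C(_,_); lia.
have X2 : \sum_(1 <= k < n) ('C(r + d * n, 3 * n - (n + k)))%:R *: bS F l2 (n + k)
   = ('C(d, 1))%:R *: \sum_(1 <= k < n) ('C(r, n - k))%:R *: bS F l2 (n + k).
  rewrite scaler_sumr big_nat_cond [RHS]big_nat_cond; apply: eq_bigr.
  move=> k /andP [/andP [k1 k2] _]; rewrite scalerA -natrM -L //; last by lia.
  by congr (_%:R *: _); congr 'C(_,_); lia.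
have X3 : \sum_(1 <= k < n) ('C(r + d * n, 3 * n - (2 * n + k)))%:R *: bS F l2 (2 * n + k)
   = \sum_(1 <= k < n) ('C(r, n - k))%:R *: bS F l2 (2 * n + k).
  rewrite big_nat_cond [RHS]big_nat_cond; apply: eq_bigr.
  move=> k /andP [/andP [k1 k2] _].
  have := L 0 (n - k)%N hr; rewrite bin0 mul1n => <-; last by lia.
  by congr (_%:R *: _); congr 'C(_,_); lia.
have B1 : ('C(r + d * n, 3 * n - n))%:R = ('C(d, 2))%:R :> F.
  have := L 2 0 hr hn; rewrite bin0 muln1 addn0 => <-.
  by congr (_%:R); congr 'C(_,_); lia.
have B2 : ('C(r + d * n, 3 * n - 2 * n))%:R = ('C(d, 1))%:R :> F.
  have := L 1 0 hr hn; rewrite bin0 muln1 addn0 => <-.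
  by congr (_%:R); congr 'C(_,_); lia.
rewrite X1 X2 X3 B1 B2.
exact: ac5.
Qed.
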